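(* Assume $r\neq0$ and $r+s=0$. For $0\le j\le d$ let $\bar\theta_j=(d-2j)(d-2j+1)$. Then for all $0\le i,j\le d$, $$u_i(\bar\theta_j)={}_4F_3\left(\genfrac..{0pt}{}{-i,\ i-d+r,\ -j,\ j-d-\frac12}{-d,\ \frac{r-d}{2},\ \frac{r-d+1}{2}}\,\middle|\,1\right).$$
   Context: Fix an integer $d\ge0$ and $r,s\in(-1,\infty)$. Write $(x)_i=x(x+1)\cdots(x+i-1)$, $(x)_0=1$, and ${}_mF_n\left(\genfrac..{0pt}{}{a_1,\dots,a_m}{b_1,\dots,b_n}\,\middle|\,1\right)=\sum_{k\ge0}\frac{(a_1)_k\cdots(a_m)_k}{(b_1)_k\cdots(b_n)_k\,k!}$ (terminating sums here). For $0\le i\le d$ put $\theta_i=(d-i)(d-i+r+s+1)$ (these are distinct). Let $u_0,\dots,u_d$ be the unique real polynomials of degree at most $d$ such that $u_i(\theta_j)={}_3F_2\left(\genfrac..{0pt}{}{-i,-j,j-r-s-2d-1}{-s-d,-d}\,\middle|\,1\right)$ for all $0\le i,j\le d$ (the dual Hahn polynomials). *)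

(* Defs.v *)
From HB Require Import structures.
From mathcomp Require Import all_boot all_order all_algebra.
Set Implicit Arguments. Unset Strict Implicit. Unset Printing Implicit Defensive.
Import Order.TTheory GRing.Theory Num.Theory.
Local Open Scope ring_scope.

Definition poch (R : fieldType) (x : R) (k : nat) : R :=
  \prod_(m < k) (x + m%:R).

(* When some numerator parameter equals -n with n <= N (as in all uses below),
   all terms with k > n vanish, so this is exactly the terminating series. *)
Definition hyp (R : fieldType) (N : nat) (as_ bs : seq R) : R :=
  \sum_(k < N.+1)
     (\prod_(a <- as_) poch a k) / ((\prod_(b <- bs) poch b k) * k`!%:R).

Definition theta (R : fieldType) (d : nat) (r s : R) (i : nat) : R :=
  (d%:R - i%:R) * (d%:R - i%:R + r + s + 1).

Definition thetabar (R : fieldType) (d : nat) (j : nat) : R :=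
  (d%:R - 2 * j%:R) * (d%:R - 2 * j%:R + 1).

Definition dualHahn3F2 (R : fieldType) (d : nat) (r s : R) (i j : nat) : R :=
  hyp d [:: - i%:R; - j%:R; j%:R - r - s - 2 * d%:R - 1] [:: - s - d%:R; - d%:R].

Definition target4F3 (R : fieldType) (d : nat) (r : R) (i j : nat) : R :=
  hyp d [:: - i%:R; i%:R - d%:R + r; - j%:R; j%:R - d%:R - 2^-1]
        [:: - d%:R; (r - d%:R) / 2; (r - d%:R + 1) / 2].

(* Main.v *)
Require Import Defs.
From HB Require Import structures.
From mathcomp Require Import all_boot all_order all_algebra.
From mathcomp Require Import ring lra zify.
Import Order.TTheory GRing.Theory Num.Theory.
Local Open Scope ring_scope.

Section Aux.
Variable R : realFieldType.

Lemma poch0 (x : R) : poch x 0 = 1.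
Proof. by rewrite /poch big_ord0. Qed.

Lemma pochS (x : R) n : poch x n.+1 = poch x n * (x + n%:R).
Proof. by rewrite /poch big_ord_recr. Qed.

Lemma pochSl (x : R) n : poch x n.+1 = x * poch (x + 1) n.
Proof.
rewrite /poch big_ord_recl /= addr0; congr (_ * _).
apply: eq_bigr => i _; rewrite /bump /= add1n -natr1; ring.
Qed.

Lemma poch_negnat (k n : nat) : (k < n)%N -> poch (- (k%:R : R)) n = 0.
Proof.
move=> kn; rewrite /poch (bigD1 (Ordinal kn)) //= addNr mul0r //.
Qed.

Lemma poch_neq0 (x : R) n : (forall m, (m < n)%N -> x + m%:R != 0) -> poch x n != 0.
Proof.
move=> h; rewrite /poch; apply/prodf_neq0 => i _; exact: h.
Qed.

Lemma rec_sum (d : nat) (c : nat -> R) (phi : R -> nat -> R) (A C : R -> R)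
  (mu nu : nat -> R) (lam : R) :
  (forall x n, A x * (phi (x+1) n - phi x n) + C x * (phi (x-1) n - phi x n)
     = mu n * phi x n + nu n * phi x n.-1) ->
  nu 0%N = 0 ->
  (forall n, (n < d)%N -> (mu n - lam) * c n + nu n.+1 * c n.+1 = 0) ->
  (mu d - lam) * c d = 0 ->
  forall x,
  A x * (\sum_(n < d.+1) c n * phi (x+1) n - \sum_(n < d.+1) c n * phi x n)
  + C x * (\sum_(n < d.+1) c n * phi (x-1) n - \sum_(n < d.+1) c n * phi x n)
  = lam * \sum_(n < d.+1) c n * phi x n.
Proof.
move=> hop hnu0 hstep hlast x.
rewrite -!sumrB !mulr_sumr -big_split /=.
under eq_bigr => n _ do
  rewrite -!mulrBr mulrCA [C x * _]mulrCA -mulrDr hop mulrDr.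
rewrite big_split /=.
set S1 := \sum_(n < d.+1) _ * (mu _ * _).
set S2 := \sum_(n < d.+1) _ * (nu _ * _).
set S3 := \sum_(n < d.+1) lam * _.
have e2 : S2 = \sum_(i < d) c i.+1 * (nu i.+1 * phi x i).
  by rewrite /S2 big_ord_recl /= hnu0 mul0r mulr0 add0r.
have e1 : S1 - S3 = \sum_(i < d) (c i * (mu i * phi x i) - lam * (c i * phi x i)).
  rewrite /S1 /S3 -sumrB big_ord_recr /=.
  have -> : c d * (mu d * phi x d) - lam * (c d * phi x d) = (mu d - lam) * c d * phi x d by ring.
  by rewrite hlast mul0r addr0.
apply/eqP; rewrite -subr_eq0; apply/eqP.
have -> : S1 + S2 - S3 = (S1 - S3) + S2 by ring.
rewrite e1 e2 -big_split /= big1 // => i _.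
have -> : c i * (mu i * phi x i) - lam * (c i * phi x i) + c i.+1 * (nu i.+1 * phi x i)
  = ((mu i - lam) * c i + nu i.+1 * c i.+1) * phi x i by ring.
by rewrite hstep // mul0r.
Qed.


Lemma rec_uniq (d : nat) (A C : R -> R) (lam : R) (F G : R -> R) :
  (forall i, (i < d)%N -> A i%:R != 0) -> C 0 = 0 ->
  (forall x, A x * (F (x+1) - F x) + C x * (F (x-1) - F x) = lam * F x) ->
  (forall x, A x * (G (x+1) - G x) + C x * (G (x-1) - G x) = lam * G x) ->
  F 0 = G 0 ->
  forall i, (i <= d)%N -> F i%:R = G i%:R.
Proof.
move=> hA hC hF hG h0.
have step : forall x, A x != 0 -> F x = G x -> C x * F (x-1) = C x * G (x-1) ->
    F (x+1) = G (x+1).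
  move=> x hAx e1 e2; apply: (mulfI hAx).
  have eF : A x * F (x+1) = lam * F x + A x * F x - (C x * F (x-1) - C x * F x).
    by rewrite -(hF x); ring.
  have eG : A x * G (x+1) = lam * G x + A x * G x - (C x * G (x-1) - C x * G x).
    by rewrite -(hG x); ring.
  by rewrite eF eG e1 e2.
have key : forall i, (i < d)%N -> F i%:R = G i%:R /\ F i.+1%:R = G i.+1%:R.
  elim=> [|i IH] hi.
    split=> //; rewrite -natr1 add0r -[1](add0r 1); apply: step => //.
      exact: (hA 0%N).
    by rewrite hC !mul0r.
  have [_ e] := IH (ltnW hi); split=> //.
  rewrite -[i.+2%:R]natr1; apply: step => //; first exact: hA.
  have [e'] := IH (ltnW hi). by rewrite -natr1 addrK e'.
case=> [|i] hi; first exact: h0.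
by have [] := key i hi.
Qed.

Lemma phi_op (d : nat) (r x : R) (n : nat) :
  (x - d%:R) * (x + r - d%:R) * (poch (- (x + 1)) n - poch (- x) n)
  + x * (x + r) * (poch (- (x - 1)) n - poch (- x) n)
  = n%:R * (n%:R - 1 - 2 * d%:R) * poch (- x) n
    + (- (n%:R * (n%:R - 1 - d%:R) * (n%:R - 1 - d%:R + r))) * poch (- x) n.-1.
Proof.
case: n => [|[|p]]; first by rewrite /= !poch0; ring.
  by rewrite /= !pochS !poch0; ring.
set P := poch (- x + 1) p.
have h1 : poch (- (x + 1)) p.+2 = - (x + 1) * (- x * P).
  rewrite pochSl pochSl /P; congr (_ * (_ * poch _ _)); ring.
have h2 : poch (- x) p.+2 = - x * (P * (- x + 1 + p%:R)).
  by rewrite pochSl pochS.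
have h3 : poch (- (x - 1)) p.+2 = P * (- x + 1 + p%:R) * (- x + 1 + p.+1%:R).
  rewrite pochS pochS /P; congr (_ * _ * _); [congr poch|congr (_ + _)|congr (_ + _)]; ring.
have h4 : poch (- x) p.+1 = - x * P by rewrite pochSl.
rewrite /= h1 h2 h3 h4; ring.
Qed.

Lemma psi_op (d : nat) (r x : R) (n : nat) :
  let psi y m := poch (- y) m * poch (y - d%:R + r) m in
  (x - d%:R) * (x + r - d%:R) * (psi (x + 1) n - psi x n)
  + x * (x + r) * (psi (x - 1) n - psi x n)
  = 2 * n%:R * (2 * n%:R - 2 * d%:R - 1) * psi x n
    + (- (n%:R * (n%:R - 1 - d%:R) * (r - d%:R + 2 * n%:R - 2) * (r - d%:R + 2 * n%:R - 1))) * psi x n.-1.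
Proof.
move=> psi; rewrite /psi.
case: n => [|[|p]]; first by rewrite /= !poch0; ring.
  by rewrite /= !pochS !poch0; ring.
set P := poch (- x + 1) p.
set Q := poch (x - d%:R + r + 1) p.
have h1 : poch (- (x + 1)) p.+2 = - (x + 1) * (- x * P).
  rewrite pochSl pochSl /P; congr (_ * (_ * poch _ _)); ring.
have h2 : poch (- x) p.+2 = - x * (P * (- x + 1 + p%:R)).
  by rewrite pochSl pochS.
have h3 : poch (- (x - 1)) p.+2 = P * (- x + 1 + p%:R) * (- x + 1 + p.+1%:R).
  rewrite pochS pochS /P; congr (_ * _ * _); [congr poch|congr (_ + _)|congr (_ + _)]; ring.
have h4 : poch (- x) p.+1 = - x * P by rewrite pochSl.
have g1 : poch (x + 1 - d%:R + r) p.+2 = Q * (x - d%:R + r + 1 + p%:R) * (x - d%:R + r + 1 + p.+1%:R).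
  rewrite pochS pochS /Q; congr (_ * _ * _); [congr poch|congr (_ + _)|congr (_ + _)]; ring.
have g2 : poch (x - d%:R + r) p.+2 = (x - d%:R + r) * (Q * (x - d%:R + r + 1 + p%:R)).
  by rewrite pochSl pochS.
have g3 : poch (x - 1 - d%:R + r) p.+2 = (x - 1 - d%:R + r) * ((x - d%:R + r) * Q).
  rewrite pochSl pochSl /Q; congr (_ * (_ * poch _ _)); ring.
have g4 : poch (x - d%:R + r) p.+1 = (x - d%:R + r) * Q by rewrite pochSl.
rewrite /= h1 h2 h3 h4 g1 g2 g3 g4; ring.
Qed.


Lemma hyp3 (d : nat) (a b e p q : R) :
  hyp d [:: a; b; e] [:: p; q] =
  \sum_(n < d.+1) (poch b n * poch e n / (poch p n * poch q n * n`!%:R)) * poch a n.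
Proof. rewrite /hyp; apply: eq_bigr => n _; rewrite !big_cons !big_nil !mulr1 !mulrA; ring. Qed.

Lemma hyp4 (d : nat) (a b e f p q t : R) :
  hyp d [:: a; b; e; f] [:: p; q; t] =
  \sum_(n < d.+1) (poch e n * poch f n / (poch p n * poch q n * poch t n * n`!%:R))
     * (poch a n * poch b n).
Proof. rewrite /hyp; apply: eq_bigr => n _; rewrite !big_cons !big_nil !mulr1 !mulrA; ring. Qed.

Lemma sum_at0 (d : nat) (c : nat -> R) (g : nat -> R) :
  \sum_(n < d.+1) c n * (poch (- 0) n * g n) = c 0%N * g 0%N.
Proof.
rewrite big_ord_recl /= big1 ?addr0 ?poch0 ?mul1r // => n _.
by rewrite /bump /= add1n pochSl oppr0 !mul0r mulr0.
Qed.

Lemma sum_at0' (d : nat) (c : nat -> R) :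
  \sum_(n < d.+1) c n * poch (- 0) n = c 0%N.
Proof.
rewrite big_ord_recl /= big1 ?addr0 ?poch0 ?mulr1 // => n _.
by rewrite /bump /= add1n pochSl oppr0 !mul0r mulr0.
Qed.

End Aux.
Theorem lemma3p4 (R : realFieldType) (d : nat) (r s : R)
    (hr : -1 < r) (hs : -1 < s) (hr0 : r != 0) (hrs : r + s = 0)
    (u : nat -> {poly R})
    (hdeg : forall i, (i <= d)%N -> (size (u i) <= d.+1)%N)
    (hval : forall i j, (i <= d)%N -> (j <= d)%N ->
              (u i).[theta d r s j] = dualHahn3F2 d r s i j) :
  forall i j, (i <= d)%N -> (j <= d)%N ->
    (u i).[thetabar R d j] = target4F3 d r i j.
Proof.
move=> i j hi hj.
have hs' : s = - r by apply: (addrI r); rewrite hrs addrN.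
have r1 : r < 1 by move: hs; rewrite hs'; lra.
have rnz : forall a b : nat, r + a%:R - b%:R != 0.
  move=> a b; apply/eqP => h.
  case: (leqP a b) => hab.
    have e : r = (b - a)%:R by rewrite natrB //; lra.
    move: e; case: (b - a)%N => [|m] e.
      by move: hr0; rewrite e eqxx.
    have : 1 <= (m.+1)%:R :> R by rewrite ler1n.
    lra.
  have e : r = - (a - b)%:R by rewrite natrB ?(ltnW hab) //; lra.
  have : 1 <= (a - b)%:R :> R by rewrite ler1n subn_gt0.
  lra.
pose k := if (2 * j <= d)%N then (2 * j)%N else (2 * d - 2 * j + 1)%N.
have hk : (k <= d)%N by rewrite /k; case: ifP => h; lia.
have hkR : k%:R = 2 * j%:R :> R \/ k%:R = 2 * d%:R - 2 * j%:R + 1 :> R.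
  rewrite /k; case: ifP => h; [left | right].
    exact: (natrM R 2 j).
  have e : (2 * d - 2 * j + 1 + 2 * j = 2 * d + 1)%N by lia.
  have e' : ((2 * d - 2 * j + 1 + 2 * j)%N%:R : R) = (2 * d + 1)%N%:R by rewrite e.
  rewrite !natrD in e' *; lra.
have eth : thetabar R d j = theta d r s k.
  by rewrite /thetabar /theta hs'; case: hkR => ->; ring.
have elam : k%:R * (k%:R - 2 * d%:R - 1) = 2 * j%:R * (2 * j%:R - 2 * d%:R - 1) :> R.
  by case: hkR => ->; ring.
rewrite eth hval // /dualHahn3F2 /target4F3.
have e1 : k%:R - r - s - 2 * d%:R - 1 = k%:R - 2 * d%:R - 1 by rewrite hs'; ring.
have e2 : - s - d%:R = r - d%:R by rewrite hs'; ring.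
rewrite e1 e2 hyp3 hyp4.
have two0 : (2 : R) != 0 by rewrite pnatr_eq0.
have hfact : forall n, n`!%:R != 0 :> R by move=> n; rewrite pnatr_eq0 -lt0n fact_gt0.
have hdm : forall m, (m < d)%N -> - d%:R + m%:R != 0 :> R.
  by move=> m hm; rewrite addrC subr_eq0 eqr_nat neq_ltn hm.
have hpd : forall n, (n <= d)%N -> poch (- d%:R : R) n != 0.
  move=> n hn; apply: poch_neq0 => m hm; apply: hdm; lia.
have hrm : forall m, r - d%:R + m%:R != 0.
  by move=> m; rewrite addrAC rnz.
have hpr : forall n, poch (r - d%:R) n != 0 :> R.
  by move=> n; apply: poch_neq0 => m hm; apply: hrm.
have hh1m : forall m, (r - d%:R) / 2 + m%:R != 0.
  move=> m; have -> : (r - d%:R) / 2 + m%:R = (r + (2 * m)%:R - d%:R) / 2.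
    by rewrite natrM; field.
  by rewrite mulf_neq0 ?invr_neq0.
have hh2m : forall m, (r - d%:R + 1) / 2 + m%:R != 0.
  move=> m; have -> : (r - d%:R + 1) / 2 + m%:R = (r + (2 * m + 1)%:R - d%:R) / 2.
    by rewrite natrD natrM; field.
  by rewrite mulf_neq0 ?invr_neq0.
have hph1 : forall n, poch ((r - d%:R) / 2) n != 0 :> R.
  by move=> n; apply: poch_neq0 => m hm; apply: hh1m.
have hph2 : forall n, poch ((r - d%:R + 1) / 2) n != 0 :> R.
  by move=> n; apply: poch_neq0 => m hm; apply: hh2m.
pose cF n := poch (- k%:R : R) n * poch (k%:R - 2 * d%:R - 1) n /
     (poch (r - d%:R) n * poch (- d%:R) n * n`!%:R).
pose cG n := poch (- j%:R : R) n * poch (j%:R - d%:R - 2^-1) n /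
     (poch (- d%:R) n * poch ((r - d%:R) / 2) n * poch ((r - d%:R + 1) / 2) n * n`!%:R).
pose F (x : R) := \sum_(n < d.+1) cF n * poch (- x) n.
pose G (x : R) := \sum_(n < d.+1) cG n * (poch (- x) n * poch (x - d%:R + r) n).
change (F i%:R = G i%:R).
pose A (x : R) := (x - d%:R) * (x + r - d%:R).
pose C (x : R) := x * (x + r).
pose lam := (k%:R : R) * (k%:R - 2 * d%:R - 1).
apply: (@rec_uniq R d A C lam F G _ _ _ _ _ i hi).
- move=> m hm; rewrite /A mulf_neq0 //.
    by rewrite subr_eq0 eqr_nat neq_ltn hm.
  by have -> : (m%:R : R) + r - d%:R = r - d%:R + m%:R by ring.
- by rewrite /C mul0r.
- move=> x; rewrite /F.
  apply: (@rec_sum R d cF (fun y n => poch (- y) n) A C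
     (fun n => n%:R * (n%:R - 1 - 2 * d%:R))
     (fun n => - (n%:R * (n%:R - 1 - d%:R) * (n%:R - 1 - d%:R + r))) lam).
  + move=> y n; exact: phi_op.
  + by rewrite /=; ring.
  + move=> n hn; rewrite /cF /lam !pochS factS natrM.
    field.
    by rewrite hfact hrm hpr hpd ?(ltnW hn) // hdm // addrC natr1 pnatr_eq0.
  + rewrite /lam /cF.
    have -> : ((d%:R : R) * (d%:R - 1 - 2 * d%:R) - k%:R * (k%:R - 2 * d%:R - 1)) *
      (poch (- k%:R : R) d * poch (k%:R - 2 * d%:R - 1) d /
       (poch (r - d%:R) d * poch (- d%:R) d * d`!%:R))
      = (poch (- k%:R : R) d * (- k%:R + d%:R)) *
        ((k%:R - 2 * d%:R - 1 + d%:R) * poch (k%:R - 2 * d%:R - 1) d /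
         (poch (r - d%:R) d * poch (- d%:R) d * d`!%:R)) by ring.
    by rewrite -pochS poch_negnat ?mul0r.
- move=> x; rewrite /G.
  apply: (@rec_sum R d cG (fun y n => poch (- y) n * poch (y - d%:R + r) n) A C
     (fun n => 2 * n%:R * (2 * n%:R - 2 * d%:R - 1))
     (fun n => - (n%:R * (n%:R - 1 - d%:R) * (r - d%:R + 2 * n%:R - 2) * (r - d%:R + 2 * n%:R - 1))) lam).
  + move=> y n; have h := @psi_op R d r y n; cbv zeta in h; exact: h.
  + by rewrite /=; ring.
  + move=> n hn; rewrite /cG /lam elam !pochS factS natrM.
    field.
    have q1 : r - d%:R + n%:R * 2 = r + (n * 2)%:R - d%:R by rewrite natrM; ring.
    have q2 : r - d%:R + 1 + n%:R * 2 = r + (n * 2 + 1)%:R - d%:R by rewrite natrD natrM; ring.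
    by rewrite q1 q2 !rnz hfact hph1 hph2 hpd ?(ltnW hn) // hdm // addrC natr1 pnatr_eq0.
  + rewrite /lam elam /cG.
    have -> : (2 * (d%:R : R) * (2 * d%:R - 2 * d%:R - 1) - 2 * j%:R * (2 * j%:R - 2 * d%:R - 1)) *
      (poch (- j%:R : R) d * poch (j%:R - d%:R - 2^-1) d /
       (poch (- d%:R) d * poch ((r - d%:R) / 2) d * poch ((r - d%:R + 1) / 2) d * d`!%:R))
      = (poch (- j%:R : R) d * (- j%:R + d%:R)) *
        (2 * (2 * j%:R - 1) * poch (j%:R - d%:R - 2^-1) d /
         (poch (- d%:R) d * poch ((r - d%:R) / 2) d * poch ((r - d%:R + 1) / 2) d * d`!%:R)) by ring.
    by rewrite -pochS poch_negnat ?mul0r.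
- rewrite /F /G sum_at0' (@sum_at0 R d cG (fun n => poch (0 - d%:R + r) n)) /cF /cG !poch0.
  by rewrite !mul1r !mulr1.
Qed.
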